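(* Let $n=4$ and let $PV_1,\dots,PV_4$ be independent random variables with distributions $P_1=0.05\,\delta_{0.05}+0.95\,\delta_{1}$, $P_2=0.025\,\delta_{0.10}+0.975\,\delta_{1}$, $P_3=0.025\,\delta_{0.15}+0.975\,\delta_{1}$, $P_4=\delta_1$, where all four null hypotheses are true and each $F_i$ is the distribution function of $P_i$. Let $G=F_1+F_2+F_3+F_4$. Consider the DBH procedure at level $\alpha=0.05$: with ordered observed $p$-values $pv_{(1)}\le\cdots\le pv_{(4)}$, define adjusted $p$-values $\widetilde{pv}_{(4)}=pv_{(4)}$ and $\widetilde{pv}_{(i)}=\min\{\widetilde{pv}_{(i+1)},G(pv_{(i)})/i\}$ for $i=3,2,1$, and reject exactly those hypotheses whose adjusted $p$-value is $\le 0.05$. Then the probability of at least one rejection (which equals the FDR, since all nulls are true) is exactly $0.05059375>0.05$. In particular, the DBH procedure does not control the FDR at level $\alpha$ in general, even under independence.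
   Context: $\delta_x$ denotes the Dirac (point mass) measure at $x$. The FDR is $E[V/\max(R,1)]$ where $R$ is the number of rejections and $V$ the number of rejected true null hypotheses; when all nulls are true it equals $P(R\ge1)$. *)

(* Defs.v *)
From HB Require Import structures.
From mathcomp Require Import all_boot all_order all_algebra.
Set Implicit Arguments. Unset Strict Implicit. Unset Printing Implicit Defensive.
Import Order.TTheory GRing.Theory Num.Theory.
Local Open Scope ring_scope.

(* A finitely supported distribution on Q: a list of (atom, mass) pairs,
   i.e. sum_k mass_k * delta_{atom_k}. *)
Definition dist := seq (rat * rat).

Definition cdf (P : dist) (t : rat) : rat := \sum_(a <- P | a.1 <= t) a.2.

(* Joint law of independent random variables with laws Ps (product measure):
   list of (outcome vector, probability). *)
Fixpoint joint (Ps : seq dist) : seq (seq rat * rat) :=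
  match Ps with
  | [::] => [:: ([::], 1)]
  | P :: Ps' => [seq (a.1 :: v.1, a.2 * v.2) | a <- P, v <- joint Ps']
  end.

Definition expect (Ps : seq dist) (f : seq rat -> rat) : rat :=
  \sum_(o <- joint Ps) o.2 * f o.1.

Definition prob (Ps : seq dist) (E : seq rat -> bool) : rat :=
  \sum_(o <- joint Ps | E o.1) o.2.

(* DBH adjusted p-values on the sorted list s = [pv_(1); ...; pv_(n)]
   (1-based ranks, pv_(i) = nth 0 s i.-1).
   tilde G s m = adjusted p-value of rank n - m, computed by
   tilde_(n) = pv_(n),  tilde_(i) = min(tilde_(i+1), G(pv_(i))/i). *)
Fixpoint tilde (G : rat -> rat) (s : seq rat) (m : nat) : rat :=
  match m with
  | 0%N => nth 0 s (size s).-1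
  | m'.+1 =>
      let i := (size s - m'.+1)%N in
      Num.min (tilde G s m') (G (nth 0 s i.-1) / i%:R)
  end.

Definition adjusted (G : rat -> rat) (s : seq rat) (i : nat) : rat :=
  tilde G s (size s - i)%N.

Definition DBH_R (G : rat -> rat) (alpha : rat) (pv : seq rat) : nat :=
  let s := sort <=%R pv in
  count (fun i => adjusted G s i <= alpha) (iota 1 (size s)).

Definition Gsum (Ps : seq dist) (t : rat) : rat := \sum_(P <- Ps) cdf P t.

(* FDR when all null hypotheses are true: V = R, FDR = E[V / max(R,1)]. *)
Definition FDR_all_null (Ps : seq dist) (R : seq rat -> nat) : rat :=
  expect Ps (fun pv => (R pv)%:R / (maxn (R pv) 1)%:R).

Definition P1 : dist := [:: (1/20, 1/20); (1, 19/20)].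
Definition P2 : dist := [:: (1/10, 1/40); (1, 39/40)].
Definition P3 : dist := [:: (3/20, 1/40); (1, 39/40)].
Definition P4 : dist := [:: (1, 1)].
Definition Ps_ex : seq dist := [:: P1; P2; P3; P4].

(* Main.v *)
Require Import Defs.
From HB Require Import structures.
From mathcomp Require Import all_boot all_order all_algebra.
From mathcomp Require Import ring lra.
From Stdlib Require Import FunctionalExtensionality.
Import Order.TTheory GRing.Theory Num.Theory.
Local Open Scope ring_scope.
Definition bigf {I : Type} (r : seq I) (P : pred I) (F : I -> rat) : rat :=
  foldr (fun i acc => if P i then F i + acc else acc) 0 r.
Lemma bigfE {I : Type} (r : seq I) (P : pred I) (F : I -> rat) :
  \sum_(i <- r | P i) F i = bigf r P F.
Proof. by rewrite unlock. Qed.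
Lemma GsumE : Gsum Ps_ex = fun t => bigf Ps_ex predT (fun P => bigf P (fun a => (a.1 <= t)%R) (fun a => a.2)).
Proof. apply: functional_extensionality => t. rewrite /Gsum bigfE. congr bigf; apply: functional_extensionality => P. by rewrite /cdf bigfE. Qed.

Definition a1 : rat := 1/20. Definition a2 : rat := 1/10. Definition a3 : rat := 3/20.
Lemma jointE : joint Ps_ex =
 [:: ([:: a1; a2; a3; 1], 1/20 * (1/40 * (1/40 * (1 * 1))));
     ([:: a1; a2; 1; 1], 1/20 * (1/40 * (39/40 * (1 * 1))));
     ([:: a1; 1; a3; 1], 1/20 * (39/40 * (1/40 * (1 * 1))));
     ([:: a1; 1; 1; 1], 1/20 * (39/40 * (39/40 * (1 * 1))));
     ([:: 1; a2; a3; 1], 19/20 * (1/40 * (1/40 * (1 * 1))));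
     ([:: 1; a2; 1; 1], 19/20 * (1/40 * (39/40 * (1 * 1))));
     ([:: 1; 1; a3; 1], 19/20 * (39/40 * (1/40 * (1 * 1))));
     ([:: 1; 1; 1; 1], 19/20 * (39/40 * (39/40 * (1 * 1))))].
Proof. reflexivity. Qed.

Definition Rf := DBH_R (Gsum Ps_ex) (1/20).
Lemma RfE : Rf = DBH_R (fun t => bigf Ps_ex predT (fun P => bigf P (fun a => (a.1 <= t)%R) (fun a => a.2))) (1/20).
Proof. by rewrite /Rf GsumE. Qed.
Ltac rv := rewrite RfE; vm_compute; reflexivity.
Lemma r1 : Rf [:: a1; a2; a3; 1] = 3%N. Proof. rv. Qed.
Lemma r2 : Rf [:: a1; a2; 1; 1] = 2%N. Proof. rv. Qed.
Lemma r3 : Rf [:: a1; 1; a3; 1] = 2%N. Proof. rv. Qed.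
Lemma r4 : Rf [:: a1; 1; 1; 1] = 1%N. Proof. rv. Qed.
Lemma r5 : Rf [:: 1; a2; a3; 1] = 2%N. Proof. rv. Qed.
Lemma r6 : Rf [:: 1; a2; 1; 1] = 0%N. Proof. rv. Qed.
Lemma r7 : Rf [:: 1; 1; a3; 1] = 0%N. Proof. rv. Qed.
Lemma r8 : Rf [:: 1; 1; 1; 1] = 0%N. Proof. rv. Qed.

Theorem mainTheorem3 :
  let R := DBH_R (Gsum Ps_ex) (1/20) in
  prob Ps_ex (fun pv => (1 <= R pv)%N) = 1619 / (32 * 1000) /\
  FDR_all_null Ps_ex R = 1619 / (32 * 1000) /\
  1/20 < FDR_all_null Ps_ex R.
Proof.
rewrite /=.
have E : FDR_all_null Ps_ex (DBH_R (Gsum Ps_ex) (1/20)) = 1619 / (32 * 1000).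
  rewrite /FDR_all_null /expect bigfE jointE -/Rf /bigf /=.
  rewrite r1 r2 r3 r4 r5 r6 r7 r8 /=. rewrite /maxn /=. by field.
split; [| split; [exact E | rewrite E; vm_compute; reflexivity]].
rewrite /prob bigfE jointE /bigf. cbn [foldr fst snd]. rewrite -/Rf.
rewrite r1 r2 r3 r4 r5 r6 r7 r8 /=. by field.
Qed.
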